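(* Let $a,\lambda\in\mathbb{R}^n$ and $\beta\in\mathbb{R}^m$ with $\|a\|=\|\lambda\|=\|\beta\|=1$, $\lambda\neq\pm a$, and $d\in\mathbb{R}^m$ with $\|d\|<1$, such that $\lambda^\mathsf{T} a+d^\mathsf{T}\beta\ge0$. Let $$x_\beta=\sqrt{\tfrac{1-(d^\mathsf{T}\beta)^2}{1-(\lambda^\mathsf{T} a)^2}}\,\lambda-\Big(d^\mathsf{T}\beta+\lambda^\mathsf{T} a\sqrt{\tfrac{1-(d^\mathsf{T}\beta)^2}{1-(\lambda^\mathsf{T} a)^2}}\Big)a$$ (the optimal solution of $\max_x\{\lambda^\mathsf{T} x:\|x\|\le1,\ a^\mathsf{T} x+d^\mathsf{T}\beta\le0\}$), and $\phi_\lambda(\beta)=\max_x\{\lambda^\mathsf{T} x:\|x\|\le1,\ a^\mathsf{T} x+d^\mathsf{T}\beta\le0\}$. Then every sequence $(x_k)_k$ in the span $\langle\lambda,a\rangle$ converging to $x_\beta$ with $\|x_k\|=1$ and $a^\mathsf{T} x_k+d^\mathsf{T}\beta<0$ for all $k$ satisfies $$\lim_{k\to\infty}\frac{\lambda^\mathsf{T}(x_k-x_\beta)}{a^\mathsf{T}(x_k-x_\beta)}=\frac{d^\mathsf{T}\beta+\lambda^\mathsf{T} a\,\phi_\lambda(\beta)}{\phi_\lambda(\beta)+d^\mathsf{T}\beta\,\lambda^\mathsf{T} a}.$$ Moreover, such sequences always exist.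
   Context: $\|\cdot\|$ is the Euclidean norm; $\langle\lambda,a\rangle$ denotes the linear span of $\lambda$ and $a$. *)

(* Defs.v *)
From HB Require Import structures.
From mathcomp Require Import all_boot all_order all_algebra.
From mathcomp Require Import all_classical all_reals all_analysis.
Set Implicit Arguments. Unset Strict Implicit. Unset Printing Implicit Defensive.
Import Order.TTheory GRing.Theory Num.Theory.
Import numFieldNormedType.Exports.
Local Open Scope classical_set_scope.
Local Open Scope ring_scope.

Definition dotv (R : realType) (n : nat) (u v : 'rV[R]_n) : R :=
  \sum_(i < n) u 0 i * v 0 i.

Definition enorm (R : realType) (n : nat) (u : 'rV[R]_n) : R :=
  Num.sqrt (dotv u u).

Definition in_span2 (R : realType) (n : nat) (lam a x : 'rV[R]_n) : Prop :=
  exists s t : R, x = s *: lam + t *: a.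

Definition phi_lam (R : realType) (n m : nat) (lam a : 'rV[R]_n)
  (d beta : 'rV[R]_m) : R :=
  sup [set y : R | exists x : 'rV[R]_n,
         y = dotv lam x /\ enorm x <= 1 /\ dotv a x + dotv d beta <= 0].

Definition x_beta (R : realType) (n m : nat) (lam a : 'rV[R]_n)
  (d beta : 'rV[R]_m) : 'rV[R]_n :=
  let s := Num.sqrt ((1 - (dotv d beta) ^+ 2) / (1 - (dotv lam a) ^+ 2)) in
  s *: lam - (dotv d beta + dotv lam a * s) *: a.

(* Main.v *)
Require Import Defs.
From HB Require Import structures.
From mathcomp Require Import all_boot all_order all_algebra.
From mathcomp Require Import all_classical all_reals all_analysis.
From mathcomp Require Import ring lra.
Import Order.TTheory GRing.Theory Num.Theory.
Import numFieldNormedType.Exports.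
Local Open Scope classical_set_scope.
Local Open Scope ring_scope.

Section S.
Context {R : realType} {n : nat}.
Implicit Types u v w : 'rV[R]_n.

Lemma dotvC u v : dotv u v = dotv v u.
Proof. by apply: eq_bigr => i _; rewrite mulrC. Qed.
Lemma dotvDr u v w : dotv u (v + w) = dotv u v + dotv u w.
Proof. by rewrite /dotv -big_split; apply: eq_bigr => i _; rewrite mxE mulrDr. Qed.
Lemma dotvZr u (k : R) v : dotv u (k *: v) = k * dotv u v.
Proof. by rewrite /dotv mulr_sumr; apply: eq_bigr => i _; rewrite mxE mulrCA. Qed.
Lemma dotvNr u v : dotv u (- v) = - dotv u v.
Proof. by rewrite /dotv -sumrN; apply: eq_bigr => i _; rewrite mxE mulrN. Qed.
Lemma dotvBr u v w : dotv u (v - w) = dotv u v - dotv u w.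
Proof. by rewrite dotvDr dotvNr. Qed.
Lemma dotvDl u v w : dotv (v + w) u = dotv v u + dotv w u.
Proof. by rewrite dotvC dotvDr !(dotvC u). Qed.
Lemma dotvZl u (k : R) v : dotv (k *: v) u = k * dotv v u.
Proof. by rewrite dotvC dotvZr dotvC. Qed.
Lemma dotvNl u v : dotv (- v) u = - dotv v u.
Proof. by rewrite dotvC dotvNr dotvC. Qed.
Lemma dotvBl u v w : dotv (v - w) u = dotv v u - dotv w u.
Proof. by rewrite dotvDl dotvNl. Qed.
Lemma dotv_ge0 u : 0 <= dotv u u.
Proof. by apply: sumr_ge0 => i _; rewrite -expr2 sqr_ge0. Qed.
Lemma dotv_eq0 u : dotv u u = 0 -> u = 0.
Proof.
move=> /eqP; rewrite psumr_eq0; last by move=> i _; rewrite -expr2 sqr_ge0.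
move=> /allP H; apply/rowP => i; rewrite mxE.
by have := H i (mem_index_enum _); rewrite -expr2 sqrf_eq0 => /eqP.
Qed.
Lemma enorm1 u : enorm u = 1 -> dotv u u = 1.
Proof. by move=> h; rewrite -(sqr_sqrtr (dotv_ge0 u)) -/(enorm u) h expr1n. Qed.
Lemma enorm_le1 u : enorm u <= 1 -> dotv u u <= 1.
Proof.
move=> h; rewrite -(sqr_sqrtr (dotv_ge0 u)) -/(enorm u).
have : 0 <= enorm u by apply: sqrtr_ge0.
move: (enorm u) h => e; nra.
Qed.
Lemma enorm_lt1 u : enorm u < 1 -> dotv u u < 1.
Proof.
move=> h; rewrite -(sqr_sqrtr (dotv_ge0 u)) -/(enorm u).
have : 0 <= enorm u by apply: sqrtr_ge0.
move: (enorm u) h => e; nra.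
Qed.

Lemma cvg_dotv v (x : nat -> 'rV[R]_n) l : x @ \oo --> l ->
  (fun k => dotv v (x k)) @ \oo --> dotv v l.
Proof.
move=> hx; rewrite /dotv.
apply: (@cvg_big R _ +%R 0 xpredT (@add_continuous R^o) _ \oo (index_enum 'I_n)
  (fun i k => v 0 i * x k 0 i) (fun i => v 0 i * l 0 i) _) => i _.
apply: cvgMr; exact: (cvg_comp _ _ hx (@coord_continuous R 1 n 0 i l)).
Qed.

Lemma num1 (c dl s : R) : c^+2 < 1 -> dl^+2 < 1 -> 0 <= s ->
  s^+2 * (1 - c^+2) = 1 - dl^+2 -> 0 <= c + dl -> 0 <= dl + c * s.
Proof.
move=> hc hd hs hss hcd.
have [c0|c0] := leP 0 c.
  have [d0|d0] := leP 0 dl; first by nra.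
  have h1 : dl^+2 <= c^+2 by nra.
  have h2 : 1 - c^+2 <= s^+2 * (1 - c^+2) by lra.
  have h3 : 1 <= s^+2 by nra.
  have : 1 <= s by nra.
  nra.
have h1 : c^+2 <= dl^+2 by nra.
have d0 : 0 < dl by lra.
have h2 : c^+2 * s^+2 <= dl^+2 by nra.
nra.
Qed.

Lemma num2 (c dl L t Ls S : R) : c^+2 < 1 -> 0 < S ->
  Ls + c * dl = S -> Ls^+2 + 2 * c * Ls * dl + dl^+2 = 1 - c^+2 ->
  0 <= dl + c * Ls ->
  L^+2 - 2 * c * L * t + t^+2 <= 1 - c^+2 -> t <= - dl -> L <= Ls.
Proof.
move=> hc hS hLs hQ hn hQL ht.
set q := (L - Ls - c * (t + dl))^+2 + (1 - c^+2) * (t + dl)^+2.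
have hq : 0 <= q by rewrite /q addr_ge0 ?sqr_ge0 // mulr_ge0 ?sqr_ge0 // subr_ge0 ltW.
have hp : (dl + c * Ls) * (t + dl) <= 0 by rewrite mulr_ge0_le0 // addrC -lerBrDl sub0r.
have hid : 2 * S * (L - Ls) = (L^+2 - 2 * c * L * t + t^+2) - (Ls^+2 + 2 * c * Ls * dl + dl^+2)
   + 2 * ((dl + c * Ls) * (t + dl)) - q.
  by rewrite /q -hLs; ring.
have : S * (L - Ls) <= 0 by lra.
rewrite pmulr_rle0 // subr_le0 //.
Qed.
End S.

Theorem lemma2 (R : realType) (n m : nat) (a lam : 'rV[R]_n) (beta d : 'rV[R]_m) :
  enorm a = 1 -> enorm lam = 1 -> enorm beta = 1 ->
  lam != a -> lam != - a ->
  enorm d < 1 ->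
  0 <= dotv lam a + dotv d beta ->
  (forall x : nat -> 'rV[R]_n,
     (forall k, in_span2 lam a (x k)) ->
     (forall k, enorm (x k) = 1) ->
     (forall k, dotv a (x k) + dotv d beta < 0) ->
     x @ \oo --> x_beta lam a d beta ->
     (fun k => dotv lam (x k - x_beta lam a d beta)
               / dotv a (x k - x_beta lam a d beta)) @ \oo -->
       (dotv d beta + dotv lam a * phi_lam lam a d beta)
         / (phi_lam lam a d beta + dotv d beta * dotv lam a))
  /\
  (exists x : nat -> 'rV[R]_n,
     (forall k, in_span2 lam a (x k)) /\
     (forall k, enorm (x k) = 1) /\
     (forall k, dotv a (x k) + dotv d beta < 0) /\
     x @ \oo --> x_beta lam a d beta).
Proof.
move=> /enorm1 haa /enorm1 hll /enorm1 hbb hla hlna /enorm_lt1 hdd hcd.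
set c := dotv lam a in hcd *.
set dl := dotv d beta in hcd *.
have hal : dotv a lam = c by rewrite dotvC.
have hc2 : c^+2 < 1.
  have h1 : forall k : R, dotv (lam - k *: a) (lam - k *: a) = 1 - 2 * k * c + k^+2.
    move=> k; rewrite !(dotvBl, dotvBr, dotvZl, dotvZr) hll haa hal -/c; ring.
  have := dotv_ge0 (lam - c *: a); rewrite h1 => h2.
  rewrite lt_neqAle; apply/andP; split; last by nra.
  apply/eqP => hc.
  have : c = 1 \/ c = -1.
    have : (c - 1) * (c + 1) = 0.
      have -> : (c - 1) * (c + 1) = c^+2 - 1 by ring.
      by rewrite hc subrr.
    by move/eqP; rewrite mulf_eq0 => /orP[/eqP h|/eqP h]; [left|right]; lra.
  case=> hc1.
    have := h1 1; rewrite hc1 scale1r => h3.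
    have /dotv_eq0 /eqP : dotv (lam - a) (lam - a) = 0 by rewrite h3; ring.
    by rewrite subr_eq0 (negPf hla).
  have := h1 (-1); rewrite hc1 scaleN1r opprK => h3.
  have /dotv_eq0 /eqP : dotv (lam + a) (lam + a) = 0 by rewrite h3; ring.
  by rewrite addr_eq0 (negPf hlna).
have hd2 : dl^+2 < 1.
  have h1 : dotv (d - dl *: beta) (d - dl *: beta) = dotv d d - dl^+2.
    rewrite !(dotvBl, dotvBr, dotvZl, dotvZr) hbb (dotvC beta d) -/dl; ring.
  have := dotv_ge0 (d - dl *: beta); rewrite h1; lra.
have hc1 : 0 < 1 - c^+2 by lra.
set s0 := Num.sqrt ((1 - dl^+2) / (1 - c^+2)).
have hs0 : 0 <= s0 by apply: sqrtr_ge0.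
have hs0sq : s0^+2 * (1 - c^+2) = 1 - dl^+2.
  have hne : 1 - c^+2 != 0 by rewrite gt_eqF.
  rewrite sqr_sqrtr ?divfK //.
  by rewrite divr_ge0 //; lra.
have hs0p : 0 < s0.
  rewrite lt_neqAle hs0 andbT; apply/eqP => h0.
  by move: hs0sq; rewrite -h0; lra.
set xb := x_beta lam a d beta.
have hxb : xb = s0 *: lam - (dl + c * s0) *: a by [].
clearbody xb.
set Ls := s0 - (dl + c * s0) * c.
have hLxb : dotv lam xb = Ls.
  by rewrite hxb !(dotvBr, dotvZr) hll -/c; rewrite /Ls; ring.
have hAxb : dotv a xb = - dl.
  by rewrite hxb !(dotvBr, dotvZr) haa hal; ring.
have hxbxb : dotv xb xb = 1.
  rewrite hxb !(dotvBl, dotvBr, dotvZl, dotvZr) hll haa hal -/c.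
  transitivity (s0^+2 * (1 - c^+2) + dl^+2); first ring.
  by rewrite hs0sq; ring.
set S := s0 * (1 - c^+2).
have hS : 0 < S by rewrite /S mulr_gt0.
have hLsS : Ls + c * dl = S by rewrite /Ls /S; ring.
have hQs : Ls^+2 + 2 * c * Ls * dl + dl^+2 = 1 - c^+2.
  rewrite /Ls; transitivity ((s0^+2 * (1 - c^+2) + dl^+2) * (1 - c^+2)).
    ring.
  by rewrite hs0sq; ring.
have hn : 0 <= dl + c * Ls.
  have -> : dl + c * Ls = (1 - c^+2) * (dl + c * s0) by rewrite /Ls; ring.
  by rewrite mulr_ge0 ?(ltW hc1) // num1 // addrC.
have hxbn : enorm xb = 1 by rewrite /enorm hxbxb sqrtr1.
have hub : forall x, enorm x <= 1 -> dotv a x + dl <= 0 -> dotv lam x <= Ls.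
  move=> x /enorm_le1 hx hax.
  set L := dotv lam x; set t := dotv a x in hax *.
  have hQ : L^+2 - 2*c*L*t + t^+2 <= 1 - c^+2.
    have := dotv_ge0 ((1 - c^+2) *: x - ((L - c*t) *: lam + (t - c*L) *: a)).
    rewrite !(dotvBl, dotvBr, dotvDl, dotvDr, dotvZl, dotvZr) hll haa hal (dotvC x lam) (dotvC x a) -/L -/t -/c.
    move=> h.
    have h2 : 0 <= (1 - c^+2) * ((1 - c^+2) * dotv x x - (L^+2 - 2*c*L*t + t^+2)).
      apply: (le_trans h); rewrite le_eqVlt; apply/orP; left; apply/eqP; ring.
    rewrite pmulr_rge0 // subr_ge0 in h2.
    have := ler_wpM2l (ltW hc1) hx; rewrite mulr1; lra.
  apply: (@num2 R c dl L t Ls S hc2 hS hLsS hQs hn hQ); lra.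
have hphi : phi_lam lam a d beta = Ls.
  apply/le_anti/andP; split.
    apply: ge_sup.
      exists Ls, xb; split => //; split; first by rewrite hxbn.
      by rewrite hAxb addNr.
    by move=> y [x [-> [h1 h2]]]; exact: hub.
  apply: ub_le_sup; last first.
    exists xb; split => //; split; first by rewrite hxbn.
    by rewrite hAxb addNr.
  by exists Ls => y [x [-> [h1 h2]]]; exact: hub.
rewrite hphi.
split.
  move=> x hspan hnorm hneg hcvg.
  pose Lk k := dotv lam (x k); pose Ak k := dotv a (x k).
  have hQk : forall k, Lk k ^+2 - 2*c*Lk k*Ak k + Ak k^+2 = 1 - c^+2.
    move=> k; have [s [t hx]] := hspan k.
    transitivity ((1 - c^+2) * dotv (x k) (x k)); last by rewrite enorm1 ?mulr1.
    rewrite /Lk /Ak hx !(dotvDl, dotvDr, dotvZl, dotvZr) hll haa hal -/c; ring.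
  have hid : forall k, (Lk k - Ls) * (Lk k + Ls - 2*c*Ak k) = (Ak k + dl) * (2*c*Ls - Ak k + dl).
    move=> k; apply/eqP; rewrite -subr_eq0; apply/eqP.
    transitivity ((Lk k ^+2 - 2*c*Lk k*Ak k + Ak k^+2) - (Ls^+2 + 2 * c * Ls * dl + dl^+2)).
      ring.
    by rewrite hQk hQs subrr.
  have hL : Lk @ \oo --> Ls by rewrite -hLxb; exact: cvg_dotv.
  have hA : Ak @ \oo --> - dl by rewrite -hAxb; exact: cvg_dotv.
  have hD : (fun k => Lk k + Ls - 2*c*Ak k) @ \oo --> Ls + Ls - 2*c*(-dl).
    apply: cvgB; first by apply: cvgD => //; exact: cvg_cst.
    by apply: cvgMr.
  have hN : (fun k => 2*c*Ls - Ak k + dl) @ \oo --> 2*c*Ls - (-dl) + dl.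
    apply: cvgD; last exact: cvg_cst.
    by apply: cvgB => //; exact: cvg_cst.
  have hD0 : Ls + Ls - 2*c*(-dl) != 0.
    by rewrite gt_eqF //; lra.
  have hlim : (fun k => (2*c*Ls - Ak k + dl) / (Lk k + Ls - 2*c*Ak k)) @ \oo -->
     (2*c*Ls - (-dl) + dl) / (Ls + Ls - 2*c*(-dl)).
    by apply: cvgM => //; apply: cvgV.
  have -> : (dl + c * Ls) / (Ls + dl * c) = (2*c*Ls - (-dl) + dl) / (Ls + Ls - 2*c*(-dl)).
    apply/eqP; rewrite eqr_div //; last by rewrite gt_eqF //; lra.
    apply/eqP; ring.
  have hDp : \forall k \near \oo, 0 < Lk k + Ls - 2*c*Ak k.
    by apply: (cvgr_gt _ hD); lra.
  apply: (cvg_trans _ hlim); apply: near_eq_cvg.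
  near=> k.
  have Dk : 0 < Lk k + Ls - 2*c*Ak k by near: k.
  rewrite /= !dotvBr hLxb hAxb -/(Lk k) -/(Ak k) opprK.
  have hAk : Ak k + dl < 0 by exact: hneg.
  have D0 : Lk k + Ls - 2*c*Ak k != 0 by rewrite gt_eqF.
  have A0 : Ak k + dl != 0 by rewrite lt_eqF.
  apply/eqP; rewrite eqr_div //.
  by rewrite mulrC -hid mulrC.
pose e := - (dl *: lam + Ls *: a).
pose E := dotv e e.
have hE : 0 <= E by apply: dotv_ge0.
have hea : dotv a e = - S.
  rewrite /e dotvNr dotvDr !dotvZr haa hal -hLsS; ring.
have hexb : dotv e xb = 0.
  rewrite /e dotvNl dotvDl !dotvZl hLxb hAxb; ring.
pose K := S / (E + 1).
have hK : 0 < K by rewrite /K divr_gt0 //; lra.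
pose h k := K * harmonic k.
have hh0 : forall k, 0 < h k by move=> k; rewrite /h mulr_gt0 // harmonic_gt0.
have hhS : forall k, h k * (E + 1) <= S.
  move=> k; rewrite /h /K mulrAC divfK ?gt_eqF //; last by lra.
  rewrite -[leRHS]mulr1 ler_wpM2l ?(ltW hS) // /harmonic /=.
  by rewrite invf_le1 // ler1n.
pose den k := 1 + h k * h k * E.
have hden : forall k, 0 < den k.
  by move=> k; rewrite /den; have := hh0 k; nra.
pose p k := (1 - h k * h k * E) / den k.
pose q k := 2 * h k / den k.
exists (fun k => p k *: xb + q k *: e).
split.
  move=> k; exists (p k * s0 - q k * dl), (- (p k * (dl + c * s0)) - q k * Ls).
  by apply/rowP => i; rewrite hxb /e !mxE; ring.
split.
  move=> k; rewrite /enorm.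
  rewrite !(dotvDl, dotvDr, dotvZl, dotvZr) hxbxb (dotvC xb e) hexb -/E.
  have hd0 : den k != 0 by rewrite gt_eqF.
  rewrite (_ : _ + _ = 1) ?sqrtr1 //.
  rewrite /p /q; move: hd0; rewrite /den => hd0; field => //.
split.
  move=> k; rewrite !(dotvDr, dotvZr) hAxb hea.
  have hd0 : den k != 0 by rewrite gt_eqF.
  have -> : p k * - dl + q k * - S + dl = (2 * h k * (dl * h k * E - S)) / den k.
    by rewrite /p /q; move: hd0; rewrite /den => hd0; field.
  rewrite pmulr_llt0 ?invr_gt0 //.
  have hk := hh0 k; have hkS := hhS k.
  have hES : h k * E < S by nra.
  have hE0 : 0 <= h k * E by rewrite mulr_ge0 // ltW.
  have : dl * (h k * E) < S.
    have [dl0|dl0] := leP dl 0; first by nra.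
    have : dl < 1 by nra.
    nra.
  nra.
have hh : h @ \oo --> 0.
  rewrite -(mulr0 K); apply: cvgMr; exact: cvg_harmonic.
have hdenc : den @ \oo --> 1 + 0 * 0 * E.
  apply: cvgD; first exact: cvg_cst.
  apply: cvgMl; exact: cvgM.
have hden1 : 1 + 0 * 0 * E != 0 by rewrite mul0r mul0r addr0 oner_neq0.
have hp : p @ \oo --> (1 - 0 * 0 * E) / (1 + 0 * 0 * E).
  apply: cvgM; last exact: cvgV.
  apply: cvgB; first exact: cvg_cst.
  apply: cvgMl; exact: cvgM.
have hq : q @ \oo --> (2 * 0) / (1 + 0 * 0 * E).
  apply: cvgM; last exact: cvgV.
  by apply: cvgMr.
have H : (fun k => p k *: xb + q k *: e) @ \oo -->
    ((1 - 0 * 0 * E) / (1 + 0 * 0 * E)) *: xb + (2 * 0 / (1 + 0 * 0 * E)) *: e.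
  by apply: cvgD; apply: cvgZ => //; exact: cvg_cst.
move: H; rewrite ?mul0r ?mulr0 ?subr0 ?addr0 ?divr1 ?mul0r ?mulr0 scale1r scale0r addr0.
by [].
Unshelve. all: by end_near.
Qed.
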